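(* Let $\mathcal F$ be a Banach function space compactly embedded in $C(\mathbf X)$ and let $L\ge1$, $\gamma>0$ satisfy $\mathcal H_\epsilon(U_{\mathcal F})\le L(1/\epsilon)^\gamma$ for all $\epsilon\in(0,1/2]$. There exists a strategy for Predictor that guarantees, for all $N=1,2,\dots$, all $F\in\mathcal F$ and all moves of Reality, $$\sum_{n=1}^N(y_n-\mu_n)^2\le\sum_{n=1}^N(y_n-F(x_n))^2+C\left(L^{\frac1{\gamma+1}}\phi^{\frac\gamma{\gamma+1}}N^{\frac\gamma{\gamma+1}}+\log^+\log\frac N\gamma+\log\log\phi\right),$$ where $C$ is a universal constant and $\phi:=2\max(1,\|F\|_{\mathcal F})$.
   Context: Protocol: $\mathbf X$ a nonempty topological space; at each round $n$ Reality announces $x_n\in\mathbf X$, Predictor announces $\mu_n\in\mathbb R$, Reality announces $y_n\in[-1,1]$; a strategy for Predictor maps each history to $\mu_n$. $C(\mathbf X)$: bounded continuous real functions with supremum norm. A Banach function space compactly embedded in $C(\mathbf X)$: a linear subspace $\mathcal F\subseteq C(\mathbf X)$ with a norm making it a Banach space whose unit ball $U_{\mathcal F}$ is compact in $C(\mathbf X)$. $\mathcal H_\epsilon(A)$: $\log_2$ of the minimal number of points of $A$ forming an $\epsilon$-net for $A$ in the supremum metric. $\log=\log_2$; $\log^+t=\log t$ if $t\ge1$ and $0$ otherwise. *)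

(* Defs.v *)
From HB Require Import structures.
From mathcomp Require Import all_boot all_order all_algebra.
From mathcomp Require Import all_classical all_reals all_analysis.
Set Implicit Arguments. Unset Strict Implicit. Unset Printing Implicit Defensive.
Import Order.TTheory GRing.Theory Num.Theory numFieldNormedType.Exports.
Local Open Scope classical_set_scope.
Local Open Scope ring_scope.

Section Defs.
Variables (R : realType) (X : topologicalType).

Definition supnorm (f : X -> R) : R := sup [set `|f x| | x in [set: X]].

Definition CX : set (X -> R) :=
  [set f | continuous f /\ exists M : R, forall x, `|f x| <= M].

(* F is a linear subspace of C(X), nF is a norm on F making it a Banach space,
   and the unit ball of F is compact in C(X) (supremum-norm topology,
   i.e. the topology of uniform convergence on X). *)
Definition banach_compactly_embedded (F : set (X -> R)) (nF : (X -> R) -> R) : Prop :=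
  F `<=` CX /\
      F (fun _ => 0) /\
      (forall f g, F f -> F g -> F (fun x => f x + g x)) /\
      (forall (a : R) f, F f -> F (fun x => a * f x)) /\
      (forall f g, F f -> F g -> nF (fun x => f x + g x) <= nF f + nF g) /\
      (forall (a : R) f, F f -> nF (fun x => a * f x) = `|a| * nF f) /\
      (forall f, F f -> nF f = 0 -> f = (fun _ => 0)) /\
      (forall u : nat -> X -> R, (forall n, F (u n)) ->
         (forall e : R, 0 < e -> exists M : nat, forall m n, (M <= m)%N -> (M <= n)%N ->
            nF (fun x => u m x - u n x) < e) ->
         exists f, F f /\ (fun n => nF (fun x => u n x - f x)) @ \oo --> (0 : R)) /\
      compact ([set f | F f /\ nF f <= 1] : set {uniform X -> R}).

Definition is_net_card (A : set (X -> R)) (eps : R) (n : nat) : Prop :=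
  exists s : seq (X -> R), size s = n /\ (forall g, g \in s -> A g) /\
    forall f, A f -> exists2 g, g \in s & supnorm (fun x => f x - g x) <= eps.

Definition log2 (t : R) : R := ln t / ln 2.

Definition metric_entropy (A : set (X -> R)) (eps : R) : R :=
  log2 (inf [set (n%:R : R) | n in is_net_card A eps]).

End Defs.

Definition log2p {R : realType} (t : R) : R := if 1 <= t then log2 t else 0.

(* Predictor's strategy: given the history ((x_1,y_1),...,(x_{n-1},y_{n-1})) and x_n,
   output mu_n. *)
Definition strategy (R : realType) (X : Type) := seq (X * R) -> X -> R.

Definition pred_mu (R : realType) (X : Type) (S : strategy R X)
  (x : nat -> X) (y : nat -> R) (n : nat) : R :=
  S [seq (x i, y i) | i <- iota 0 n] (x n).

(* Main.v *)
Require Import Defs.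
From HB Require Import structures.
From mathcomp Require Import all_boot all_order all_algebra.
From mathcomp Require Import all_classical all_reals all_analysis.
From mathcomp Require Import ring lra zify.
Import Order.TTheory GRing.Theory Num.Theory numFieldNormedType.Exports.
Local Open Scope classical_set_scope.
Local Open Scope ring_scope.
Set Implicit Arguments. Unset Strict Implicit. Unset Printing Implicit Defensive.

Section Mix.
Variable R : realType.

Lemma expR_quad (a : R) : -(4^-1) <= a <= 4^-1 -> expR a <= 1 + a + a^+2.
Proof.
move=> /andP[ha1 ha2].
set E := expR (- (a / 2)).
have hE : 1 - a / 2 <= E by rewrite /E; have := expR_ge1Dx (- (a/2)); lra.
have hEa : expR a * E ^+ 2 = 1.
  rewrite /E expr2 mulrA -!expRD.
  have -> : a + - (a / 2) + - (a / 2) = 0 by lra.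
  exact: expR0.
have ha0 : 0 < expR a := expR_gt0 a.
have hpoly : 1 <= (1 + a + a^+2) * (1 - a/2)^+2.
  have : 0 <= a^+2 / 4 * (1 - 3 * a + a^+2) by apply: mulr_ge0; nra.
  nra.
have hb : 0 < 1 - a/2 by lra.
have : expR a * (1 - a/2)^+2 <= expR a * E ^+ 2.
  apply: ler_wpM2l; first exact: ltW.
  by rewrite !expr2; apply: ler_pM; lra.
nra.
Qed.


Lemma tangent (y p q : R) : -1 <= y <= 1 -> -1 <= p <= 1 -> -1 <= q <= 1 ->
  expR (- ((y - q) ^+ 2 / 16)) <= expR (- ((y - p) ^+ 2 / 16)) * (1 + (y - p) * (q - p) / 8).
Proof.
move=> /andP[y1 y2] /andP[p1 p2] /andP[q1 q2].
set a := ((y - p) ^+ 2 - (y - q) ^+ 2) / 16.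
have -> : expR (- ((y - q) ^+ 2 / 16)) = expR (- ((y - p) ^+ 2 / 16)) * expR a.
  rewrite -expRD; apply: congr1; rewrite /a; lra.
apply: ler_wpM2l; first exact: ltW (expR_gt0 _).
have e1 : 0 <= (y - p) ^+ 2 <= 4 by rewrite sqr_ge0 /=; nra.
have e2 : 0 <= (y - q) ^+ 2 <= 4 by rewrite sqr_ge0 /=; nra.
have ha : -(4^-1) <= a <= 4^-1 by apply/andP; split; rewrite /a; lra.
have hq := expR_quad ha.
have hs : ((y - p) + (y - q)) ^+ 2 <= 16 by nra.
have hkey : a ^+ 2 <= (q - p) ^+ 2 / 16.
  have -> : a = (q - p) * ((y - p) + (y - q)) / 16 by rewrite /a; ring.
  rewrite !expr2.
  have := sqr_ge0 (q - p); rewrite expr2 => hq0; nra.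
have : 1 + a + a ^+ 2 <= 1 + (y - p) * (q - p) / 8.
  have : a = (y - p) * (q - p) / 8 - (q - p) ^+ 2 / 16 by rewrite /a; field.
  lra.
lra.
Qed.


Lemma mix (n : nat) (w q : nat -> R) (y : R) :
  (forall m, 0 <= w m) -> 0 < \sum_(m < n) w m -> (forall m, -1 <= q m <= 1) ->
  -1 <= y <= 1 ->
  -1 <= (\sum_(m < n) w m * q m) / (\sum_(m < n) w m) <= 1 /\
  \sum_(m < n) w m * expR (- ((y - q m) ^+ 2 / 16)) <=
  (\sum_(m < n) w m) * expR (- ((y - (\sum_(m < n) w m * q m) / (\sum_(m < n) w m)) ^+ 2 / 16)).
Proof.
move=> w0 Sw0 q1 y1.
set Sw := \sum_(m < n) w m; set Sq := \sum_(m < n) w m * q m.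
set p := Sq / Sw.
have hSq1 : Sq <= Sw.
  rewrite /Sq /Sw; apply: ler_sum => i _.
  have := w0 i; have := q1 i; move=> /andP[a b] c; nra.
have hSq2 : - Sw <= Sq.
  rewrite /Sq /Sw -sumrN; apply: ler_sum => i _.
  have := w0 i; have := q1 i; move=> /andP[a b] c; nra.
have hpS : p * Sw = Sq by rewrite /p divfK // gt_eqF.
have hp : -1 <= p <= 1.
  apply/andP; split; rewrite -(ler_pM2r Sw0) hpS; by rewrite ?mulN1r ?mul1r.
split => //.
set G := expR (- ((y - p) ^+ 2 / 16)).
set c := (y - p) / 8.
apply: (@le_trans _ _ (\sum_(m < n) w m * (G * (1 + c * (q m - p))))).
  apply: ler_sum => i _; apply: ler_wpM2l => //.
  have -> : 1 + c * (q i - p) = 1 + (y - p) * (q i - p) / 8 by rewrite /c; field.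
  exact: tangent y1 hp (q1 i).
rewrite (eq_bigr (fun m : 'I_n => G * w m + (G * c) * (w m * q m) - (G * c * p) * w m));
  last by move=> i _; ring.
rewrite sumrB big_split /= -!mulr_sumr -/Sw -/Sq -hpS.
have -> : G * Sw + G * c * (p * Sw) - G * c * p * Sw = Sw * G by ring.
by [].
Qed.

End Mix.


Definition prior (R : realType) (m : nat) : R := ((m.+1 * m.+2)%:R)^-1.

Lemma prior_gt0 (R : realType) m : 0 < prior R m.
Proof. by rewrite /prior invr_gt0 ltr0n muln_gt0. Qed.

Lemma sum_prior (R : realType) K : \sum_(m < K) prior R m = 1 - (K.+1%:R)^-1.
Proof.
elim: K => [|K IH]; first by rewrite big_ord0 invr1 subrr.
rewrite big_ord_recr /= IH /prior natrM -[K.+2]addn1 natrD.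
have : (0 : R) < K.+1%:R by rewrite ltr0n.
move: (K.+1%:R : R) => a ha.
have h1 : a != 0 by rewrite gt_eqF.
have h2 : a + 1 != 0 by rewrite gt_eqF // addr_gt0.
by field; rewrite h1 h2.
Qed.

Section AA.
Variables (R : realType) (X : Type) (ex : nat -> X -> R) (x : nat -> X) (y : nat -> R)
  (mu : nat -> R).

Definition lp m t : R := if (m < 2 ^ t)%N then (y t - ex m (x t)) ^+ 2 else (y t - mu t) ^+ 2.
Definition Lp m n := \sum_(t < n) lp m t.
Definition LA n := \sum_(t < n) (y t - mu t) ^+ 2.
Definition wt m n := prior R m * expR (- (Lp m n / 16)).
Definition Psi K n := \sum_(m < K) prior R m * expR ((LA n - Lp m n) / 16).

Hypothesis exB : forall m z, -1 <= ex m z <= 1.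
Hypothesis yB : forall n, -1 <= y n <= 1.
Hypothesis hmu : forall n,
  mu n = (\sum_(m < 2 ^ n) wt m n * ex m (x n)) / (\sum_(m < 2 ^ n) wt m n).

Lemma wt_gt0 m n : 0 < wt m n.
Proof. by rewrite /wt mulr_gt0 ?prior_gt0 ?expR_gt0. Qed.

Lemma sumwt_gt0 n : 0 < \sum_(m < 2 ^ n) wt m n.
Proof.
have h : (0 < 2 ^ n)%N by rewrite expn_gt0.
rewrite (bigD1 (Ordinal h)) //=; apply: ltr_pwDl; first exact: wt_gt0.
by apply: sumr_ge0 => i _; exact: ltW (wt_gt0 _ _).
Qed.

Lemma muB n : -1 <= mu n <= 1.
Proof.
rewrite hmu.
have [h _] := @mix R (2 ^ n) (fun m => wt m n) (fun m => ex m (x n)) (y n)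
  (fun m => ltW (wt_gt0 m n)) (sumwt_gt0 n) (fun m => exB m (x n)) (yB n).
exact: h.
Qed.

Lemma Psi_step K n : (2 ^ n <= K)%N -> Psi K n.+1 <= Psi K n.
Proof.
move=> hK.
have hA m : prior R m * expR ((LA n.+1 - Lp m n.+1) / 16) =
   prior R m * expR ((LA n - Lp m n) / 16) * expR (((y n - mu n) ^+ 2 - lp m n) / 16).
  rewrite /LA /Lp !big_ord_recr /= -mulrA -expRD; congr (_ * expR _); lra.
rewrite /Psi; under eq_bigr => i _ do rewrite hA.
rewrite (bigID (fun m : 'I_K => (m < 2 ^ n)%N)) /=.
rewrite [X in _ <= X](bigID (fun m : 'I_K => (m < 2 ^ n)%N)) /=.
rewrite [X in _ + X <= _](eq_bigr (fun m : 'I_K => prior R m * expR ((LA n - Lp m n) / 16))); last first.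
  move=> i hi; rewrite /lp ifF; last exact: negbTE.
  by rewrite subrr mul0r expR0 mulr1.
apply: lerD => //.
rewrite -(big_ord_widen _ (fun m => prior R m * expR ((LA n - Lp m n) / 16) *
  expR (((y n - mu n) ^+ 2 - lp m n) / 16))) //.
rewrite -(big_ord_widen _ (fun m => prior R m * expR ((LA n - Lp m n) / 16))) //.
set C := expR (LA n / 16).
set D := expR ((y n - mu n) ^+ 2 / 16).
have e1 : forall i : 'I_(2 ^ n), prior R i * expR ((LA n - Lp i n) / 16) *
    expR (((y n - mu n) ^+ 2 - lp i n) / 16) =
   (C * D) * (wt i n * expR (- ((y n - ex i (x n)) ^+ 2 / 16))).
  move=> i; rewrite /lp ltn_ord /wt /C /D.
  have -> : (LA n - Lp i n) / 16 = LA n / 16 + - (Lp i n / 16) by lra.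
  have -> : ((y n - mu n) ^+ 2 - (y n - ex i (x n)) ^+ 2) / 16 =
    (y n - mu n) ^+ 2 / 16 + - ((y n - ex i (x n)) ^+ 2 / 16) by lra.
  rewrite !expRD; ring.
have e2 : forall i : 'I_(2 ^ n), prior R i * expR ((LA n - Lp i n) / 16) = C * wt i n.
  move=> i; rewrite /wt /C.
  have -> : (LA n - Lp i n) / 16 = LA n / 16 + - (Lp i n / 16) by lra.
  rewrite expRD; ring.
rewrite (eq_bigr _ (fun i _ => e1 i)) (eq_bigr _ (fun i _ => e2 i)) -!mulr_sumr.
have [_ h] := @mix R (2 ^ n) (fun m => wt m n) (fun m => ex m (x n)) (y n)
  (fun m => ltW (wt_gt0 m n)) (sumwt_gt0 n) (fun m => exB m (x n)) (yB n).
rewrite -hmu in h.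
have hCD : 0 <= C * D by rewrite mulr_ge0 // ltW // expR_gt0.
apply: le_trans (ler_wpM2l hCD h) _.
have hD : D * expR (- ((y n - mu n) ^+ 2 / 16)) = 1 by rewrite /D -expRD subrr expR0.
set S := \sum_(m < 2 ^ n) wt m n.
suff -> : C * D * (S * expR (- ((y n - mu n) ^+ 2 / 16))) = C * S by [].
move: hD; set E := expR _ => hD.
have -> : C * D * (S * E) = C * S * (D * E) by ring.
by rewrite hD mulr1.
Qed.


Lemma Psi_mono K N : (2 ^ N <= K)%N -> Psi K N <= Psi K 0.
Proof.
move=> hK; suff : forall n, (n <= N)%N -> Psi K n <= Psi K 0 by apply.
elim=> [|n IH] hn //.
apply: le_trans (IH (ltnW hn)); apply: Psi_step.
apply: leq_trans hK; rewrite leq_exp2l //; exact: ltnW.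
Qed.

Lemma Psi0 K : Psi K 0 <= 1.
Proof.
rewrite /Psi /LA.
under eq_bigr => i _ do rewrite /Lp !big_ord0 subrr mul0r expR0 mulr1.
rewrite sum_prior; rewrite lerBlDr lerDl invr_ge0; exact: ler0n.
Qed.

Lemma aa_regret N m : LA N <= \sum_(t < N) (y t - ex m (x t)) ^+ 2 +
  16 * ln ((m.+1 * m.+2)%:R) + 4 * \sum_(t < N) ((2 ^ t <= m)%N%:R : R).
Proof.
set K := maxn (2 ^ N) m.+1.
have hK : (2 ^ N <= K)%N by rewrite leq_maxl.
have hmK : (m < K)%N by rewrite leq_maxr.
have h1 : prior R m * expR ((LA N - Lp m N) / 16) <= 1.
  apply: le_trans (Psi0 K); apply: le_trans (Psi_mono hK).
  rewrite /Psi (bigD1 (Ordinal hmK)) //= lerDl.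
  apply: sumr_ge0 => i _; apply: mulr_ge0; [exact: ltW (prior_gt0 _ _)|exact: ltW (expR_gt0 _)].
have hP : (0 : R) < (m.+1 * m.+2)%:R by rewrite ltr0n muln_gt0.
have h2 : expR ((LA N - Lp m N) / 16) <= (m.+1 * m.+2)%:R.
  move: h1; rewrite /prior mulrC -ler_pdivlMr ?invr_gt0 // invrK mul1r //.
have h3 : (LA N - Lp m N) / 16 <= ln ((m.+1 * m.+2)%:R).
  rewrite -[X in X <= _]expRK ler_ln //; rewrite posrE ?expR_gt0 //.
have h4 : Lp m N <= \sum_(t < N) (y t - ex m (x t)) ^+ 2 +
    4 * \sum_(t < N) ((2 ^ t <= m)%N%:R : R).
  rewrite mulr_sumr -big_split /=; apply: ler_sum => t _.
  rewrite /lp; case: ifP => ht.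
    have -> : (2 ^ t <= m)%N = false by apply/negbTE; rewrite -ltnNge.
    by rewrite mulr0 addr0.
  have -> : (2 ^ t <= m)%N = true by rewrite leqNgt ht.
  have := muB t; have := yB t; move=> /andP[a b] /andP[c d].
  have e1 : (y t - mu t) ^+ 2 <= 4 by rewrite expr2; nra.
  have e2 := sqr_ge0 (y t - ex m (x t)).
  rewrite mulr1; lra.
lra.
Qed.

End AA.


Section Strat.
Variables (R : realType) (X : Type) (ex : nat -> X -> R) (d : X * R).

Definition lossH (h : seq (X * R)) (ps : seq R) (m : nat) : R :=
  \sum_(t < size h) (if (m < 2 ^ t)%N then ((nth d h t).2 - ex m (nth d h t).1) ^+ 2
                     else ((nth d h t).2 - nth 0 ps t) ^+ 2).

Definition aaP (h : seq (X * R)) (ps : seq R) (z : X) : R :=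
  (\sum_(m < 2 ^ size h) prior R m * expR (- (lossH h ps m / 16)) * ex m z) /
  (\sum_(m < 2 ^ size h) prior R m * expR (- (lossH h ps m / 16))).

Definition stepS (st : seq (X * R) * seq R) (xy : X * R) :=
  (rcons st.1 xy, rcons st.2 (aaP st.1 st.2 xy.1)).

Definition AAstrat : strategy R X := fun h z =>
  aaP h (foldl stepS ([::], [::]) h).2 z.

Lemma AAstrat_mu (x : nat -> X) (y : nat -> R) n :
  pred_mu AAstrat x y n = (\sum_(m < 2 ^ n) wt ex x y (pred_mu AAstrat x y) m n * ex m (x n)) /
     (\sum_(m < 2 ^ n) wt ex x y (pred_mu AAstrat x y) m n).
Proof.
set mu := pred_mu AAstrat x y.
pose hist k := [seq (x i, y i) | i <- iota 0 k].
have hf : forall k, foldl stepS ([::], [::]) (hist k) = (hist k, [seq mu i | i <- iota 0 k]).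
  elim=> [|k IH] //.
  rewrite /hist -addn1 iotaD map_cat /= cats1 foldl_rcons.
  rewrite -/(hist k) IH /stepS /= map_cat /= cats1; congr (_, rcons _ _).
  by rewrite /mu /pred_mu /AAstrat -/(hist k) IH.
have hL : forall m, lossH (hist n) [seq mu i | i <- iota 0 n] m = Lp ex x y mu m n.
  move=> m; rewrite /lossH /Lp /hist size_map size_iota.
  apply: eq_bigr => t _.
  have ht : (t < size (iota 0 n))%N by rewrite size_iota.
  rewrite (nth_map 0 d) // (nth_map 0 0) // nth_iota //= add0n.
rewrite {1}/mu /pred_mu /AAstrat -/(hist n) hf /aaP /hist size_map size_iota -/(hist n).
by under eq_bigr => i _ do rewrite hL; under [X in _ / X]eq_bigr => i _ do rewrite hL.
Qed.

End Strat.


Section Arith.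
Variable R : realType.

Lemma ln2_le1 : ln (2 : R) <= 1.
Proof.
rewrite -[X in _ <= X](@expRK R) ler_ln ?posrE ?expR_gt0 //.
have := @expR_ge1Dx R 1; lra.
Qed.

Lemma ln2_ge : 2^-1 <= ln (2 : R).
Proof.
rewrite -[X in X <= _](@expRK R) ler_ln ?posrE ?expR_gt0 //.
have h1 := @expR_ge1Dx R (- 2^-1).
have h2 : expR (2^-1) * expR (- 2^-1) = 1 :> R by rewrite -expRD subrr expR0.
have h3 := @expR_gt0 R (2^-1).
nra.
Qed.

Lemma ln2_gt0 : 0 < ln (2 : R).
Proof. have := ln2_ge; lra. Qed.

Lemma ln_natX (n k : nat) : (0 < n)%N -> ln ((n ^ k)%:R : R) = k%:R * ln (n%:R).
Proof.
move=> hn; rewrite natrX lnXn ?ltr0n // mulr_natl.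
all: try reflexivity.
Qed.

Lemma ln_le_ln (a b : R) : 0 < a -> a <= b -> ln a <= ln b.
Proof.
move=> ha hab; rewrite ler_ln ?posrE //; exact: lt_le_trans hab.
Qed.

Lemma ln_ge0' (a : R) : 1 <= a -> 0 <= ln a.
Proof. exact: ln_ge0. Qed.

End Arith.


Section NetEx.
Context (R : realType) (X : topologicalType).
HB.instance Definition _ := isPointed.Build {uniform X -> R} (fun _ => 0).

Lemma net_exists0 (A : set (X -> R)) (dl : R) :
  0 < dl -> compact (A : set {uniform X -> R}) ->
  exists s : seq (X -> R), (forall g, g \in s -> A g) /\
    (forall f, A f -> exists2 g, g \in s & forall z, `|f z - g z| < dl).
Proof.
move=> dl0 cA0.
have cA : cover_compact (A : set {uniform X -> R}) by move: cA0; rewrite (@compact_cover {uniform X -> R}).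
pose S (g : {uniform X -> R}) : set {uniform X -> R} := [set h | forall z, `|g z - h z| < dl].
have := cA {uniform X -> R} A (fun g => (S g)°) (fun g _ => @open_interior _ (S g)).
case.
  move=> g Ag; exists g => //.
  rewrite /interior /=; apply/uniform_nbhs.
  exists [set xy : R * R | `|xy.1 - xy.2| < dl]; split.
    by rewrite -entourage_from_ballE; exists dl => //= xy; rewrite /ball /=.
  by move=> h /= Eh z; exact: Eh.
move=> D' sD' cov.
exists [seq (g : X -> R) | g <- finmap.enum_fset D'].
split.
  move=> g /mapP [g' g'D ->]; by apply: set_mem; apply: sD'.
move=> f Af; have [g gD fg] := cov f Af.
exists (g : X -> R).
  by apply/mapP; exists g.
move=> z; have := nbhs_singleton fg z; rewrite distrC //.
Qed.

End NetEx.


Lemma sup_bound (R : realType) (X : topologicalType) (h : X -> R) z :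
  (exists M, forall z, `|h z| <= M) -> `|h z| <= supnorm h.
Proof.
move=> [M hM]; rewrite /supnorm.
apply: ub_le_sup; last by exists z.
by exists M => _ [w _ <-].
Qed.

Lemma good_net (R : realType) (X : topologicalType) (F : set (X -> R)) (nF : (X -> R) -> R)
  (L gamma dl : R) :
  (exists x : X, True) -> banach_compactly_embedded F nF ->
  metric_entropy [set f | F f /\ nF f <= 1] dl <= L * (dl^-1) `^ gamma ->
  0 < dl ->
  exists s : seq (X -> R), (forall g, g \in s -> F g /\ nF g <= 1) /\
    (forall f, F f -> nF f <= 1 -> exists k, (k < size s)%N /\
         forall z, `|f z - nth (fun _ => 0) s k z| <= dl) /\
    (0 < size s)%N /\ ln (size s)%:R <= ln 2 * (L * (dl^-1) `^ gamma).
Proof.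
move=> [x0 _] hB hent dl0.
have [hFC [hF0 [hFD [hFZ [_ [hnZ [_ [_ hcomp]]]]]]]] := hB.
set A := [set f | F f /\ nF f <= 1].
have bnd : forall f, F f -> exists M, forall z, `|f z| <= M.
  by move=> f /hFC [_ [M hM]]; exists M.
have bndD : forall f g, F f -> F g -> exists M, forall z, `|f z - g z| <= M.
  move=> f g /bnd [M1 h1] /bnd [M2 h2]; exists (M1 + M2) => z.
  by apply: le_trans (ler_normB _ _) _; apply: lerD.
have [s1 [s1A s1c]] := net_exists0 (A := A) dl0 hcomp.
have ex1 : exists n, `[< is_net_card A dl n >].
  exists (size s1); apply/asboolP; exists s1; split => //; split => // f Af.
  have [g gs fg] := s1c f Af; exists g => //.
  apply: ge_sup; first by exists `|f x0 - g x0|, x0.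
  by move=> _ [z _ <-]; exact: ltW (fg z).
case: (ex_minnP ex1) => n0 /asboolP [s0 [hs0 [s0A s0c]]] hmin.
have A0 : A (fun _ => 0).
  split => //.
  have e : (fun x : X => (0 : R) * (fun _ : X => (0:R)) x) = (fun _ => 0).
    by apply: funext => z; rewrite mul0r.
  by have := hnZ 0 (fun _ => 0) hF0; rewrite e normr0 mul0r => ->.
have n0pos : (0 < n0)%N.
  have [g gs _] := s0c _ A0; rewrite -hs0; case: (s0) gs => //.
exists s0; split; first by move=> g /s0A.
split.
  move=> f Ff nf; have [g gs fg] := s0c f (conj Ff nf).
  exists (index g s0); split; first by rewrite index_mem.
  move=> z; rewrite nth_index //.
  apply: le_trans fg; apply: (sup_bound (h := fun x => f x - g x)).
  by apply: bndD => //; have [] := s0A g gs.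
split; first by rewrite hs0.
set S := [set (n%:R : R) | n in is_net_card A dl].
have hinf : (n0%:R : R) <= inf S.
  apply: lb_le_inf; first by exists n0%:R, n0 => //; exists s0.
  move=> _ [n hn <-]; rewrite ler_nat; apply: hmin; exact/asboolP.
have hl : ln (n0%:R : R) <= ln (inf S).
  by apply: ln_le_ln => //; rewrite ltr0n.
move: hent; rewrite /metric_entropy /log2 -/A -/S => hent.
have := @ln2_gt0 R => l2.
rewrite hs0; apply: le_trans hl _.
by rewrite -ler_pdivrMl // mulrC.
Qed.

Local Open Scope nat_scope.

Definition enc2 (a b : nat) : nat := (a + b) ^ 2 + b.
Definition enc3 (t : nat * nat * nat) : nat := enc2 (enc2 t.1.1 t.1.2) t.2.

Lemma enc2_inj a b a' b' : enc2 a b = enc2 a' b' -> a = a' /\ b = b'.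
Proof.
rewrite /enc2 => h.
have hs : a + b = a' + b'.
  case: (ltngtP (a + b) (a' + b')) => // hlt.
  - have : (a + b).+1 ^ 2 <= (a' + b') ^ 2 by rewrite leq_exp2r.
    move: h; set s := a + b; set s' := a' + b'; rewrite !expnS expn0 !muln1 => h1 h2.
    nia.
  - have : (a' + b').+1 ^ 2 <= (a + b) ^ 2 by rewrite leq_exp2r.
    move: h; set s := a + b; set s' := a' + b'; rewrite !expnS expn0 !muln1 => h1 h2.
    nia.
rewrite hs in h; split; lia.
Qed.

Lemma enc3_inj : injective enc3.
Proof.
move=> [[i j] k] [[i' j'] k']; rewrite /enc3 /= => /enc2_inj [/enc2_inj [-> ->] ->] //.
Qed.

Lemma enc2_bound a b : (enc2 a b).+1 <= a.+1 ^ 2 * b.+1 ^ 2.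
Proof.
rewrite /enc2 -expnMn.
have h : (a + b).+1 <= a.+1 * b.+1 by rewrite mulSn mulnS; lia.
apply: leq_trans (_ : (a + b).+1 ^ 2 <= _); last by rewrite leq_exp2r.
rewrite !expnS expn0 !muln1; nia.
Qed.

Lemma enc3_bound i j k : (enc3 (i, j, k)).+2 <= 2 * (i.+1 ^ 4 * j.+1 ^ 4 * k.+1 ^ 2).
Proof.
rewrite /enc3 /=.
have h1 := enc2_bound (enc2 i j) k.
have h2 := enc2_bound i j.
have h3 : (enc2 i j).+1 ^ 2 <= (i.+1 ^ 2 * j.+1 ^ 2) ^ 2 by rewrite leq_exp2r.
have h4 : (enc2 (enc2 i j) k).+1 <= i.+1 ^ 4 * j.+1 ^ 4 * k.+1 ^ 2.
  apply: leq_trans h1 _; rewrite leq_mul2r; apply/orP; right.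
  by move: h3; rewrite expnMn -!expnM.
move: h4; set X := _ * _ * _; set Y := enc2 _ _; lia.
Qed.

Lemma cnt_bound (m N : nat) : 2 ^ (\sum_(t < N) (2 ^ t <= m)) <= (2 * m).+1.
Proof.
suff : 2 ^ (\sum_(t < N) (2 ^ t <= m)) <= (2 * m).+1 /\ \sum_(t < N) (2 ^ t <= m) <= N by case.
elim: N => [|N [IH1 IH2]]; first by rewrite big_ord0 /=; split.
rewrite big_ord_recr /=.
case: (leqP (2 ^ N) m) => h /=.
  move: IH1 IH2; set c := \sum_(i < N) _ => IH1 IH2.
  split; first last.
    by rewrite addn1.
  rewrite addn1 expnS.
  have : 2 ^ c <= 2 ^ N by rewrite leq_exp2l.
  move: (2 ^ c) (2 ^ N) h => u v; lia.
move: IH1 IH2; set c := \sum_(i < N) _ => IH1 IH2.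
by rewrite addn0; split => //; apply: leqW.
Qed.

Local Open Scope ring_scope.


Definition Mv (R : realType) (L g ph n : R) :=
  L `^ (g + 1)^-1 * ph `^ (g / (g + 1)) * n `^ (g / (g + 1)).

Lemma M_facts (R : realType) (L g ph n : R) :
  1 <= L -> 0 < g -> 1 <= ph -> 1 <= n ->
  [/\ 0 < Mv L g ph n, g / (g + 1) * ln n <= ln (Mv L g ph n), 1 <= Mv L g ph n
    & L * (n * ph / Mv L g ph n) `^ g = Mv L g ph n].
Proof.
move=> L1 g0 ph1 n1.
have hM : 0 < Mv L g ph n by rewrite /Mv !mulr_gt0 ?powR_gt0 //; lra.
have hlnM : ln (Mv L g ph n) = (g + 1)^-1 * ln L + g / (g + 1) * ln ph + g / (g + 1) * ln n.
  rewrite /Mv !lnM ?posrE ?mulr_gt0 ?powR_gt0 //; try lra.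
  by rewrite !ln_powR.
have lL := ln_ge0 L1; have lp := ln_ge0 ph1; have ln0 := ln_ge0 n1.
have hge : g / (g + 1) * ln n <= ln (Mv L g ph n).
  rewrite hlnM.
  have h1 : 0 <= (g + 1)^-1 * ln L by rewrite mulr_ge0 ?invr_ge0 //; lra.
  have h2 : 0 <= g / (g + 1) * ln ph by rewrite mulr_ge0 ?divr_ge0 //; lra.
  lra.
split => //.
  have h0 : 0 <= g / (g + 1) * ln n by rewrite mulr_ge0 ?divr_ge0 //; lra.
  rewrite leNgt; apply/negP => hM1.
  have := @ln_lt0 R (Mv L g ph n); rewrite hM hM1 /= => /(_ isT); lra.
have hx : 0 < n * ph / Mv L g ph n by rewrite divr_gt0 // mulr_gt0 //; lra.
apply: ln_inj; rewrite ?posrE ?mulr_gt0 ?powR_gt0 //; try lra.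
rewrite lnM ?posrE ?powR_gt0 //; last lra.
rewrite ln_powR ln_div ?posrE ?mulr_gt0 //; try lra.
rewrite lnM ?posrE //; try lra.
rewrite hlnM.
have g1 : g + 1 != 0 by rewrite gt_eqF //; lra.
field. exact: g1. all: apply: powR_gt0; lra.
Qed.


Lemma ln_pow2 (R : realType) (I : nat) : ln ((2 ^ I)%:R : R) = I%:R * ln 2.
Proof. by rewrite ln_natX. Qed.

Lemma ln_nat_ge0 (R : realType) (n : nat) : (0 < n)%N -> 0 <= ln (n%:R : R).
Proof. by move=> h; apply: ln_ge0; rewrite ler1n. Qed.

Lemma ln_succ_le (R : realType) (I : nat) : (1 <= I)%N ->
  ln (I.+1%:R : R) <= ln 2 + ln (I%:R).
Proof.
move=> hI.
have hI' : (1 : R) <= I%:R by rewrite ler1n.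
have e : ln (2 * I%:R) = ln 2 + ln (I%:R : R) by rewrite lnM ?posrE //; lra.
rewrite -e; apply: ln_le_ln; first by rewrite ltr0n.
rewrite -natr1; lra.
Qed.

Lemma lnI_bound (R : realType) (g M n : R) (I : nat) :
  0 < g -> 1 <= n -> 1 <= M -> g / (g + 1) * ln n <= ln M ->
  ((2 ^ I)%:R : R) <= n / M ->
  ln (I.+1%:R) <= 2 * M + 1 + log2p (log2 (n / g)).
Proof.
move=> g0 n1 M1 hM hI.
have l2 := @ln2_ge R; have l2' := @ln2_le1 R.
have hP : 0 <= log2p (log2 (n / g)).
  rewrite /log2p; case: ifP => // h; rewrite /log2 divr_ge0 //; last lra.
  exact: ln_ge0.
have hIl : I%:R * ln 2 <= ln n - ln M.
  rewrite -ln_pow2 -ln_div ?posrE; try lra.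
  by apply: ln_le_ln => //; rewrite ltr0n expn_gt0.
have hln : 0 <= ln n := ln_ge0 n1.
have hI2 : I%:R * ln 2 <= ln n / (g + 1).
  have : ln n / (g + 1) = ln n - g / (g + 1) * ln n.
    have : g + 1 != 0 by rewrite gt_eqF //; lra.
    by move=> h; field.
  lra.
have I0 : (0 : R) <= I%:R by [].
have hIp : ln (I.+1%:R : R) <= I%:R by rewrite -natr1 addrC le_ln1Dx //; lra.
case: (leP 1 g) => hg.
  have h1 : ln n / (g + 1) <= g / (g + 1) * ln n.
    have c0 : 0 <= (g + 1)^-1 by rewrite invr_ge0; lra.
    have hh : 0 <= (g - 1) * (g + 1)^-1 * ln n by rewrite !mulr_ge0 //; lra.
    have : g / (g + 1) * ln n - ln n / (g + 1) = (g - 1) * (g + 1)^-1 * ln n by ring.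
    lra.
  have h2 := @ln_sublinear R M; have : ln M < M by apply: h2; lra.
  move=> h3.
  have : I%:R * ln 2 <= M by lra.
  move=> h4; have : (I%:R : R) <= 2 * M by nra.
  lra.
have hng : ln n <= ln (n / g).
  rewrite ln_div ?posrE; try lra.
  have : ln g <= 0 by apply: ln_le0; lra.
  lra.
have hIn : I%:R * ln 2 <= ln (n / g).
  have : ln n / (g + 1) <= ln n.
    rewrite ler_pdivrMr; last lra.
    nra.
  lra.
case: I hI hIl hI2 hIp hIn I0 => [|I] hI hIl hI2 hIp hIn I0.
  by rewrite ln1; lra.
have hI1 : (1 : R) <= I.+1%:R by rewrite ler1n.
have hlog : I.+1%:R <= log2 (n / g).
  by rewrite /log2 ler_pdivlMr; [lra|exact: ln2_gt0].
have hP1 : 1 <= log2 (n / g) by lra.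
have hPe : log2p (log2 (n / g)) = ln (log2 (n / g)) / ln 2.
  by rewrite /log2p hP1.
have hPg : ln (I.+1%:R : R) <= log2p (log2 (n / g)).
  rewrite hPe.
  have h1 : ln (I.+1%:R : R) <= ln (log2 (n / g)) by apply: ln_le_ln => //; lra.
  have h0 : 0 <= ln (log2 (n / g)) := ln_ge0 hP1.
  rewrite ler_pdivlMr; last exact: ln2_gt0.
  nra.
have := @ln_succ_le R I.+1 isT.
lra.
Qed.

Lemma lnJ_bound (R : realType) (ph : R) (J : nat) : (1 <= J)%N -> ((2 ^ J)%:R : R) <= ph ->
  ln (J.+1%:R : R) <= 1 + log2 (log2 ph).
Proof.
move=> hJ hph.
have l2 := @ln2_ge R; have l2' := @ln2_le1 R; have l2p := @ln2_gt0 R.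
have hJ1 : (1 : R) <= J%:R by rewrite ler1n.
have hJl : J%:R * ln 2 <= ln ph.
  by rewrite -ln_pow2; apply: ln_le_ln => //; rewrite ltr0n expn_gt0.
have hlog : J%:R <= log2 ph by rewrite /log2 ler_pdivlMr.
have hl1 : 1 <= log2 ph by lra.
have h1 : ln (J%:R : R) <= ln (log2 ph) by apply: ln_le_ln => //; lra.
have h0 : 0 <= ln (log2 ph) := ln_ge0 hl1.
have h2 : ln (log2 ph) <= log2 (log2 ph).
  by rewrite /log2 ler_pdivlMr //; nra.
have := ln_succ_le R hJ.
rewrite /log2 in h2 *; lra.
Qed.

Lemma lnm_bound (R : realType) (I J k : nat) :
  ln ((enc3 (I, J, k)).+2%:R : R) <=
  1 + 4 * ln (I.+1%:R) + 4 * ln (J.+1%:R) + 2 * ln (k.+1%:R).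
Proof.
have l2' := @ln2_le1 R.
have hb := enc3_bound I J k.
apply: (le_trans (ln_le_ln (b := ((2 * (I.+1 ^ 4 * J.+1 ^ 4 * k.+1 ^ 2))%N)%:R) _ _)).
- by rewrite ltr0n.
- by rewrite ler_nat; exact: hb.
rewrite !natrM.
have ha : (0 : R) < I.+1%:R by rewrite ltr0n.
have hb' : (0 : R) < J.+1%:R by rewrite ltr0n.
have hc : (0 : R) < k.+1%:R by rewrite ltr0n.
move: (I.+1%:R : R) (J.+1%:R : R) (k.+1%:R : R) ha hb' hc => a b c ha hb' hc.
rewrite !lnM ?posrE ?mulr_gt0 //.
lra.
Qed.

Lemma cnt_real (R : realType) (m N : nat) :
  \sum_(t < N) ((2 ^ t <= m)%N%:R : R) <= 2 + 2 * ln (m.+2%:R).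
Proof.
have l2 := @ln2_ge R; have l2' := @ln2_le1 R; have l2p := @ln2_gt0 R.
rewrite -natr_sum.
set c := (\sum_(t < N) (2 ^ t <= m)%N)%N.
have hc : (2 ^ c <= (2 * m).+1)%N := cnt_bound m N.
have h1 : c%:R * ln 2 <= ln ((2 * m).+1%:R : R).
  by rewrite -ln_pow2; apply: ln_le_ln; [rewrite ltr0n expn_gt0|rewrite ler_nat].
have h2 : ln ((2 * m).+1%:R : R) <= ln 2 + ln (m.+2%:R).
  rewrite -lnM ?posrE ?ltr0n //; apply: ln_le_ln; first by rewrite ltr0n.
  have -> : (2 : R) * m.+2%:R = (2 * m.+2)%:R by rewrite natrM.
  by rewrite ler_nat; lia.
have h0 : 0 <= ln (m.+2%:R : R) by apply: ln_ge0; rewrite ler1n.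
have : (c%:R : R) * ln 2 <= 1 + ln (m.+2%:R) by lra.
move=> h3.
have hc0 : (0 : R) <= c%:R by [].
nra.
Qed.


Definition clip (R : realType) (z : R) : R := if z < -1 then -1 else if 1 < z then 1 else z.

Lemma clip_in (R : realType) (z : R) : -1 <= clip z <= 1.
Proof.
rewrite /clip; case: ifP => h1; first lra.
case: ifP => h2; first lra.
apply/andP; split; rewrite leNgt; apply/negP => h; [by rewrite h in h1|by rewrite h in h2].
Qed.

Lemma clip_loss (R : realType) (y u v e : R) : -1 <= y <= 1 -> `|u - v| <= e ->
  (y - clip u) ^+ 2 <= (y - v) ^+ 2 + 4 * e.
Proof.
move=> /andP[y1 y2]; rewrite ler_norml => /andP[e1 e2].
rewrite /clip !expr2.
case: (ltP u (-1)) => h1; [|case: (ltP 1 u) => h2];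
  (case: (ltP v (-1)) => h3; [|case: (ltP 1 v) => h4]); nra.
Qed.

Lemma lnk_bound (R : realType) (L g n ph M dl : R) (I J k sz : nat) :
  0 < g -> 1 <= L -> (k < sz)%N -> ln (sz%:R : R) <= ln 2 * (L * dl^-1 `^ g) ->
  dl^-1 = (2 ^ (I + J))%:R -> ((2 ^ I)%:R : R) <= n / M -> ((2 ^ J)%:R : R) <= ph ->
  0 < M -> L * (n * ph / M) `^ g = M -> ln (k.+1%:R : R) <= M.
Proof.
move=> g0 L1 hk hsz hdl hI hJ M0 hM.
have l2' := @ln2_le1 R; have l2p := @ln2_gt0 R.
have h1 : ln (k.+1%:R : R) <= ln (sz%:R) by apply: ln_le_ln; [rewrite ltr0n|rewrite ler_nat].
have hI0 : (0 : R) < (2 ^ I)%:R by rewrite ltr0n expn_gt0.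
have hJ0 : (0 : R) < (2 ^ J)%:R by rewrite ltr0n expn_gt0.
have h2 : dl^-1 <= n * ph / M.
  rewrite hdl expnD natrM.
  have -> : n * ph / M = n / M * ph by rewrite mulrAC.
  by apply: ler_pM; lra.
have h3 : dl^-1 `^ g <= (n * ph / M) `^ g.
  apply: ge0_ler_powR => //; first lra.
  - by rewrite nnegrE hdl ler0n.
  - by rewrite nnegrE; apply: le_trans h2; rewrite hdl ler0n.
have h4 : L * dl^-1 `^ g <= M.
  by rewrite -hM; apply: ler_wpM2l => //; lra.
have h5 : 0 <= L * dl^-1 `^ g by rewrite mulr_ge0 ?powR_ge0 //; lra.
nra.
Qed.


Lemma pow2_bracket (R : realType) (B : R) : 1 <= B ->
  exists k : nat, ((2 ^ k)%:R : R) <= B < (2 ^ k.+1)%:R.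
Proof.
move=> B1.
have ex1 : exists k, B < (2 ^ k)%:R.
  exists (Num.bound B); apply: lt_le_trans (archi_boundP _) _; first lra.
  by rewrite ler_nat; apply: ltnW; apply: ltn_expl.
case: (ex_minnP ex1) => k hk hmin.
case: k hk hmin => [|k] hk hmin; first by rewrite expn0 in hk; lra.
exists k; rewrite hk andbT leNgt; apply/negP => h.
by have := hmin k h; rewrite ltnn.
Qed.

Lemma LL_ge0 (R : realType) (ph : R) : 2 <= ph -> 0 <= log2 (log2 ph).
Proof.
move=> h; have l2p := @ln2_gt0 R.
rewrite /log2 divr_ge0 //; last lra.
apply: ln_ge0; rewrite ler_pdivlMr // mul1r; apply: ln_le_ln => //.
Qed.

Lemma P_ge0 (R : realType) (t : R) : 0 <= log2p t.
Proof.
have l2p := @ln2_gt0 R.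
rewrite /log2p; case: ifP => // h; rewrite /log2 divr_ge0 //; last lra.
exact: ln_ge0.
Qed.

Theorem mainTheorem14 (R : realType) :
  exists C : R, forall (X : topologicalType) (F : set (X -> R)) (nF : (X -> R) -> R)
    (L gamma : R),
    (exists x : X, True) ->
    banach_compactly_embedded F nF ->
    1 <= L -> 0 < gamma ->
    (forall eps : R, 0 < eps <= 2^-1 ->
       metric_entropy [set f | F f /\ nF f <= 1] eps <= L * (eps^-1) `^ gamma) ->
    exists S : strategy R X,
      forall (N : nat) (f : X -> R) (x : nat -> X) (y : nat -> R),
        (1 <= N)%N -> F f -> (forall n, -1 <= y n <= 1) ->
        let phi := 2 * Num.max 1 (nF f) in
        \sum_(n < N) (y n - pred_mu S x y n) ^+ 2
        <= \sum_(n < N) (y n - f (x n)) ^+ 2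
           + C * (L `^ (gamma + 1)^-1 * phi `^ (gamma / (gamma + 1))
                    * (N%:R) `^ (gamma / (gamma + 1))
                  + log2p (log2 (N%:R / gamma)) + log2 (log2 phi)).
Proof.
exists 1000.
move=> X F nF L gamma hX hB L1 g0 hent.
have [x0 _] := hX.
have [hFC [hF0 [hFD [hFZ [_ [hnZ _]]]]]] := hB.
pose dl (i j : nat) : R := ((2 ^ (i + j))%:R)^-1.
pose Pn (i j : nat) (s : seq (X -> R)) :=
  (forall g, g \in s -> F g /\ nF g <= 1) /\
  (forall f, F f -> nF f <= 1 -> exists k, (k < size s)%N /\
         forall z, `|f z - nth (fun _ => 0) s k z| <= dl i j) /\
  (0 < size s)%N /\ ln (size s)%:R <= ln 2 * (L * ((dl i j)^-1) `^ gamma).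
have hnet : forall i j, (0 < i + j)%N -> exists s, Pn i j s.
  move=> i j hij; apply: good_net => //.
    apply: hent; apply/andP; split; first by rewrite invr_gt0 ltr0n expn_gt0.
    rewrite lef_pV2 ?posrE ?ltr0n ?expn_gt0 //.
    have : (2 ^ 1 <= 2 ^ (i + j))%N by rewrite leq_exp2l.
    by rewrite -(ler_nat R).
  by rewrite invr_gt0 ltr0n expn_gt0.
pose net (i j : nat) : seq (X -> R) :=
  match pselect (exists s, Pn i j s) with
  | left h => projT1 (cid h) | right _ => [::] end.
have hnetP : forall i j, (0 < i + j)%N -> Pn i j (net i j).
  move=> i j hij; rewrite /net; case: pselect => [h|h].
    exact: projT2 (cid h).
  by exfalso; apply: h; apply: hnet.
pose dec (m : nat) : nat * nat * nat :=
  match pselect (exists t, enc3 t = m) with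
  | left h => projT1 (cid h) | right _ => (0, 0, 0)%N end.
have hdec : forall t, dec (enc3 t) = t.
  move=> t; rewrite /dec; case: pselect => [h|h]; last by exfalso; apply: h; exists t.
  by apply: enc3_inj; rewrite (projT2 (cid h)).
pose ex (m : nat) (z : X) : R :=
  clip ((2 ^ (dec m).1.2)%:R * nth (fun _ => 0) (net (dec m).1.1 (dec m).1.2) (dec m).2 z).
exists (AAstrat ex (x0, 0)).
move=> N f x y hN Ff yB /=.
set phi := 2 * Num.max 1 (nF f).
set mu := pred_mu (AAstrat ex (x0, 0)) x y.
have hmu : forall n, mu n = (\sum_(m < 2 ^ n) wt ex x y mu m n * ex m (x n)) /
     (\sum_(m < 2 ^ n) wt ex x y mu m n) by move=> n; exact: AAstrat_mu.
have exB : forall m z, -1 <= ex m z <= 1 by move=> m z; exact: clip_in.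
have hLA : \sum_(n < N) (y n - mu n) ^+ 2 = LA y mu N by [].
rewrite hLA.
have n01 : 1 <= Num.max 1 (nF f) by rewrite le_max lexx.
have nfn0 : nF f <= Num.max 1 (nF f) by rewrite le_max lexx orbT.
have phi2 : 2 <= phi by rewrite /phi; lra.
have [j0 /andP [hj1 hj2]] := pow2_bracket n01.
set J := j0.+1.
set Phi : R := (2 ^ J)%:R.
have Phi0 : 0 < Phi by rewrite ltr0n expn_gt0.
have hJphi : Phi <= phi.
  by rewrite /Phi /J expnS natrM /phi; apply: ler_wpM2l.
have hfPhi : nF f <= Phi by rewrite /Phi /J; lra.
have hN1 : (1 : R) <= N%:R by rewrite ler1n.
have phi1 : 1 <= phi by lra.
have [M0 hlnM M1 hMid] := M_facts L1 g0 phi1 hN1.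
rewrite (_ : L `^ (gamma + 1)^-1 * phi `^ (gamma / (gamma + 1)) * N%:R `^ (gamma / (gamma + 1))
   = Mv L gamma phi N%:R) //.
set M := Mv L gamma phi N%:R in M0 hlnM M1 hMid *.
have hP := P_ge0 (log2 (N%:R / gamma)).
have hLL := LL_ge0 phi2.
have hS0 : 0 <= \sum_(n < N) (y n - f (x n)) ^+ 2.
  by apply: sumr_ge0 => t _; exact: sqr_ge0.
have hLA4 : LA y mu N <= 4 * N%:R.
  rewrite /LA; apply: le_trans (_ : \sum_(t < N) (4 : R) <= _).
    apply: ler_sum => t _.
    have := muB exB yB hmu t; have := yB t; move=> /andP[a b] /andP[c d].
    rewrite expr2; nra.
  by rewrite sumr_const card_ord mulr_natr.
case: (leP N%:R M) => hNM.
  have : 1000 * (M + log2p (log2 (N%:R / gamma)) + log2 (log2 phi)) >= 1000 * M by lra.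
  lra.
have hB1 : 1 <= N%:R / M by rewrite ler_pdivlMr // mul1r; lra.
have [I /andP [hI1 hI2]] := pow2_bracket hB1.
have hIJ : (0 < I + J)%N by rewrite addnS.
have [_ [hcov [_ hsz]]] := hnetP I J hIJ.
pose f' := fun z => Phi^-1 * f z.
have Ff' : F f' := hFZ _ _ Ff.
have nf' : nF f' <= 1.
  rewrite /f' hnZ // ger0_norm; last by rewrite invr_ge0 ltW.
  have : Phi^-1 * nF f <= Phi^-1 * Phi by apply: ler_wpM2l => //; rewrite invr_ge0 ltW.
  by rewrite mulVf ?gt_eqF.
have [k [hk hkz]] := hcov f' Ff' nf'.
set g := nth (fun _ => 0) (net I J) k in hkz.
set m := enc3 (I, J, k).
have exm : forall z, ex m z = clip (Phi * g z) by move=> z; rewrite /ex /m hdec.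
have hreg := aa_regret exB yB hmu N m.
set eps : R := ((2 ^ I)%:R)^-1.
have hclose : forall z, `|Phi * g z - f z| <= eps.
  move=> z.
  have -> : f z = Phi * f' z by rewrite /f' mulrA divff ?mul1r // gt_eqF.
  rewrite -mulrBr normrM (ger0_norm (ltW Phi0)) distrC.
  apply: le_trans (ler_wpM2l (ltW Phi0) (hkz z)) _.
  rewrite /Phi /dl /eps expnD natrM invfM mulrCA divff ?mulr1 //.
have happrox : \sum_(t < N) (y t - ex m (x t)) ^+ 2 <=
    \sum_(t < N) (y t - f (x t)) ^+ 2 + 4 * (N%:R * eps).
  apply: le_trans (_ : \sum_(t < N) ((y t - f (x t)) ^+ 2 + 4 * eps) <= _).
    apply: ler_sum => t _; rewrite exm; exact: clip_loss (yB t) (hclose (x t)).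
  rewrite big_split /= sumr_const card_ord.
  have e : (4 * eps) *+ N = 4 * (N%:R * eps) by rewrite -mulr_natl; ring.
  by rewrite e.
have hNe : N%:R * eps <= 2 * M.
  have h2I : (0 : R) < (2 ^ I)%:R by rewrite ltr0n expn_gt0.
  move: hI2; rewrite expnS natrM ltr_pdivrMr // => h.
  rewrite /eps ler_pdivrMr //; lra.
have hlnmm : ln ((m.+1 * m.+2)%:R : R) <= 2 * ln (m.+2%:R).
  rewrite natrM lnM ?posrE ?ltr0n //.
  have : ln (m.+1%:R : R) <= ln (m.+2%:R) by apply: ln_le_ln; rewrite ?ltr0n ?ler_nat.
  lra.
have hm := lnm_bound R I J k.
rewrite -/m in hm.
have hIb := lnI_bound g0 hN1 M1 hlnM hI1.
have hJ1 : (1 <= J)%N by [].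
have hJb := lnJ_bound hJ1 hJphi.
have hdl : (dl I J)^-1 = (2 ^ (I + J))%:R by rewrite /dl invrK.
have hkb := lnk_bound g0 L1 hk hsz hdl hI1 hJphi M0 hMid.
have hcnt := cnt_real R m N.
lra.
Qed.
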